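(* Let $R$ be an arithmetic ring of Krull dimension $0$. Then $\lambda\text{-}\dim(R)\le 2$.
   Context: All rings are commutative with identity. $R$ is arithmetic if $R_M$ is a valuation ring (ideals totally ordered by inclusion) for every maximal ideal $M$. For an $R$-module $E$, $\lambda_R(E)$ is the supremum of the $n$ for which there is an exact sequence $F_n\to\cdots\to F_0\to E\to0$ with $F_i$ free of finite rank ($-1$ if $E$ is not finitely generated); $\lambda\text{-}\dim(R)$ is the least $n$ (or $\infty$) such that $\lambda_R(E)\ge n$ implies $\lambda_R(E)=\infty$ for all $R$-modules $E$. *)

(* Defs.v *)
From HB Require Import structures.
From mathcomp Require Import all_boot all_order all_algebra.
Set Implicit Arguments. Unset Strict Implicit. Unset Printing Implicit Defensive.
Import GRing.Theory.
Local Open Scope ring_scope.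

Section Ideals.
Variable R : comNzRingType.

Definition is_ideal (I : R -> Prop) : Prop :=
  [/\ I 0, (forall x y, I x -> I y -> I (x + y)) & (forall a x, I x -> I (a * x))].

Definition prime_ideal (P : R -> Prop) : Prop :=
  [/\ is_ideal P, ~ P 1 & (forall a b, P (a * b) -> P a \/ P b)].

Definition maximal_ideal (M : R -> Prop) : Prop :=
  [/\ is_ideal M, ~ M 1 &
     (forall J : R -> Prop, is_ideal J -> ~ J 1 -> (forall x, M x -> J x) ->
        forall x, J x -> M x)].

Definition prime_chain (P : nat -> R -> Prop) (n : nat) : Prop :=
  (forall i, (i <= n)%N -> prime_ideal (P i)) /\
  (forall i, (i < n)%N ->
     (forall x, P i x -> P i.+1 x) /\ exists x, P i.+1 x /\ ~ P i x).

Definition krull_dim_eq (d : nat) : Prop :=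
  (exists P, prime_chain P d) /\ ~ (exists P, prime_chain P d.+1).

(* The localization R_M, presented as fractions (a, s) with s outside M,
   modulo (a,s) ~ (b,t) iff u (a t - b s) = 0 for some u outside M. *)
Definition in_loc (M : R -> Prop) (x : R * R) : Prop := ~ M x.2.

Definition frac_equiv (M : R -> Prop) (x y : R * R) : Prop :=
  exists u, ~ M u /\ u * (x.1 * y.2 - y.1 * x.2) = 0.

Definition loc_ideal (M : R -> Prop) (I : R * R -> Prop) : Prop :=
  [/\ (forall x, I x -> in_loc M x),
      (forall x y, in_loc M x -> in_loc M y -> frac_equiv M x y -> I x -> I y),
      I (0, 1),
      (forall x y, I x -> I y -> I (x.1 * y.2 + y.1 * x.2, x.2 * y.2)) &
      (forall c x, in_loc M c -> I x -> I (c.1 * x.1, c.2 * x.2))].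

Definition localization_is_valuation (M : R -> Prop) : Prop :=
  forall I J, loc_ideal M I -> loc_ideal M J ->
    (forall x, I x -> J x) \/ (forall x, J x -> I x).

Definition arithmetic : Prop :=
  forall M, maximal_ideal M -> localization_is_valuation M.

(* There is an exact sequence F_n -> ... -> F_0 -> E -> 0 with F_i = R^(k i)
   free of finite rank; the map F_(i+1) -> F_i is u |-> u *m A i. *)
Definition has_free_pres (E : lmodType R) (n : nat) : Prop :=
  exists (k : nat -> nat) (A : forall i, 'M[R]_(k i.+1, k i))
         (f : {linear 'rV[R]_(k 0) -> E}),
    [/\ (forall e : E, exists u, f u = e),
        ((0 < n)%N -> forall u, f u = 0 <-> exists v, u = v *m A 0) &
        (forall i, (i.+1 < n)%N -> forall u : 'rV[R]_(k i.+1),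
             u *m A i = 0 <-> exists v, u = v *m A i.+1)].

Definition lambda_ge (E : lmodType R) (n : nat) : Prop := has_free_pres E n.

Definition lambda_infinite (E : lmodType R) : Prop := forall n, has_free_pres E n.

Definition lambda_dim_le (d : nat) : Prop :=
  exists n, (n <= d)%N /\
    forall E : lmodType R, lambda_ge E n -> lambda_infinite E.

End Ideals.

(* Main.v *)
Require Import Defs.
From mathcomp Require Import all_boot all_order all_algebra all_fingroup.
From mathcomp Require Import ring.
From mathcomp Require classical_sets boolp.
From Stdlib Require Import Classical.
Set Implicit Arguments. Unset Strict Implicit. Unset Printing Implicit Defensive.
Import GRing.Theory.
Local Open Scope ring_scope.

Section IdealTh.
Variable R : comNzRingType.

Lemma id0 (I : R -> Prop) : is_ideal I -> I 0.
Proof. by case. Qed.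
Lemma idD (I : R -> Prop) x y : is_ideal I -> I x -> I y -> I (x + y).
Proof. by case=> _ H _; apply: H. Qed.
Lemma idM (I : R -> Prop) a x : is_ideal I -> I x -> I (a * x).
Proof. by case=> _ _ H; apply: H. Qed.
Lemma idMr (I : R -> Prop) a x : is_ideal I -> I x -> I (x * a).
Proof. by move=> hI hx; rewrite mulrC; apply: idM. Qed.
Lemma idN (I : R -> Prop) x : is_ideal I -> I x -> I (- x).
Proof. by move=> hI hx; rewrite -mulN1r; apply: idM. Qed.
Lemma idB (I : R -> Prop) x y : is_ideal I -> I x -> I y -> I (x - y).
Proof. by move=> hI hx hy; apply: idD => //; apply: idN. Qed.

Lemma zorn_ideal (I S : R -> Prop) : is_ideal I -> (forall x, I x -> ~ S x) ->
  exists A, [/\ is_ideal A, (forall x, I x -> A x), (forall x, A x -> ~ S x) &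
   (forall B, is_ideal B -> (forall x, A x -> B x) -> (forall x, B x -> ~ S x) ->
      forall x, B x -> A x)].
Proof.
move=> hI hIS.
pose P := fun X : R -> Prop => X = (fun _ => False) \/
  [/\ is_ideal X, (forall x, I x -> X x) & (forall x, X x -> ~ S x)].
have := @classical_sets.Zorn_bigcup R P.
case.
- move=> F FP Ftot.
  case: (classic (exists X, F X /\ X <> (fun _ => False))) => [[X0 [FX0 X0n]]|hall].
  + have hX0 : [/\ is_ideal X0, (forall x, I x -> X0 x) & (forall x, X0 x -> ~ S x)].
      by case: (FP _ FX0).
    right; split.
    * split.
      - by exists X0 => //; case: hX0 => [[]].
      - move=> x y [X FX Xx] [Y FY Yy].
        have [hX|hX] := FP _ FX; first by move: Xx; rewrite hX.
        have [hY|hY] := FP _ FY; first by move: Yy; rewrite hY.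
        case: (Ftot _ _ FX FY) => [XY|YX].
        + exists Y => //; apply: idD; first by case: hY.
          * exact: XY.
          * exact: Yy.
        + exists X => //; apply: idD; first by case: hX.
          * exact: Xx.
          * exact: YX.
      - move=> a x [X FX Xx]; exists X => //.
        have [hX|hX] := FP _ FX; first by move: Xx; rewrite hX.
        by apply: idM => //; case: hX.
    * by move=> x Ix; exists X0 => //; case: hX0 => _ H _; apply: H.
    * move=> x [X FX Xx].
      have [hX|hX] := FP _ FX; first by move: Xx; rewrite hX.
      by case: hX => _ _ H; apply: H.
  + left; apply: boolp.funext => x; apply: boolp.propext; split => //.
    move=> [X FX Xx]; apply: hall; exists X; split => // hX.
    by move: Xx; rewrite hX.
- move=> A [PA Amax].
  case: PA => [A0|[hA IA AS]].
  + exfalso; apply: (Amax I); last by right.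
    rewrite A0; split; first by move=> x [].
    by move=> h; apply: (h 0); apply: id0.
  + exists A; split => // B hB AB BS x Bx.
    apply: NNPP => nAx; apply: (Amax B); last first.
      by right; split => // y Iy; apply: AB; apply: IA.
    split => //; move=> h; exact: nAx (h x Bx).
Qed.

End IdealTh.

Section Max.
Variable R : comNzRingType.

Lemma exists_max (I : R -> Prop) : is_ideal I -> ~ I 1 ->
  exists M, maximal_ideal M /\ forall x, I x -> M x.
Proof.
move=> hI nI1.
have [A [hA IA AS Amax]] := @zorn_ideal R I (fun x => x = 1) hI
   (fun x Ix e => nI1 (eq_ind x I Ix 1 e)).
exists A; split => //; split => //.
  by move=> h; exact: AS 1 h erefl.
move=> J hJ nJ1 AJ; apply: Amax => // x Jx e; apply: nJ1; by rewrite -e.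
Qed.

Lemma max_prime (M : R -> Prop) : maximal_ideal M ->
  forall a b, M (a * b) -> M a \/ M b.
Proof.
case=> hM nM1 Mmax a b Mab.
case: (classic (M a)) => Ma; [by left|right].
pose J := fun x => exists m r, M m /\ x = m + r * a.
have hJ : is_ideal J.
  split.
  - by exists 0, 0; rewrite mul0r addr0; split => //; apply: id0.
  - move=> x y [m [r [Mm ->]]] [m' [r' [Mm' ->]]].
    exists (m + m'), (r + r'); split; first exact: idD.
    by rewrite mulrDl; rewrite addrACA.
  - move=> c x [m [r [Mm ->]]]; exists (c * m), (c * r); split; first exact: idM.
    by rewrite mulrDr mulrA.
case: (classic (J 1)) => [[m [r [Mm e]]]|nJ1].
  have eb : b = m * b + r * (a * b) by rewrite mulrA -mulrDl -e mul1r.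
  rewrite eb; apply: idD => //; first exact: (idMr b hM Mm).
  exact: (idM r hM Mab).
exfalso; apply: Ma; apply: (Mmax J) => //.
  by move=> x Mx; exists x, 0; rewrite mul0r addr0.
by exists 0, 1; rewrite mul1r add0r; split => //; apply: id0.
Qed.

Lemma max_nM1 (M : R -> Prop) : maximal_ideal M -> ~ M 1.
Proof. by case. Qed.

Lemma max_nMM (M : R -> Prop) a b : maximal_ideal M -> ~ M a -> ~ M b -> ~ M (a * b).
Proof. by move=> hM na nb /(max_prime hM) []. Qed.

Lemma max_ideal (M : R -> Prop) : maximal_ideal M -> is_ideal M.
Proof. by case. Qed.

Lemma loc_glob (J : R -> Prop) : is_ideal J ->
  (forall M, maximal_ideal M -> exists r, J r /\ ~ M r) -> J 1.
Proof.
move=> hJ H; apply: NNPP => nJ1.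
have [M [hM JM]] := exists_max hJ nJ1.
by have [r [Jr nMr]] := H M hM; apply: nMr; apply: JM.
Qed.

Lemma max_inv (M : R -> Prop) u : maximal_ideal M -> ~ M u ->
  exists m b, M m /\ 1 = m + u * b.
Proof.
move=> hM nMu.
pose J := fun x => exists m b, M m /\ x = m + u * b.
have hJ : is_ideal J.
  split.
  - by exists 0, 0; rewrite mulr0 addr0; split => //; apply: id0; case: hM.
  - move=> x y [m [r [Mm ->]]] [m' [r' [Mm' ->]]].
    exists (m + m'), (r + r'); split; first by apply: idD => //; case: hM.
    by rewrite mulrDr addrACA.
  - move=> c x [m [r [Mm ->]]]; exists (c * m), (c * r); split.
      by apply: idM => //; case: hM.
    by rewrite mulrDr mulrCA.
case: (classic (J 1)) => [//|nJ1].
case: hM => hMi nM1 Mmax.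
exfalso; apply: nMu; apply: (Mmax J) => //.
  by move=> x Mx; exists x, 0; rewrite mulr0 addr0.
by exists 0, 1; rewrite mulr1 add0r; split => //; apply: id0.
Qed.

End Max.

Section Loc.
Variable R : comNzRingType.

Lemma ideal_add (A : R -> Prop) x : is_ideal A ->
  is_ideal (fun z => exists p r, A p /\ z = p + r * x).
Proof.
move=> hA; split.
- by exists 0, 0; rewrite mul0r addr0; split => //; apply: id0.
- move=> y z [p [r [Ap ->]]] [p' [r' [Ap' ->]]].
  exists (p + p'), (r + r'); split; first exact: idD.
  by rewrite mulrDl addrACA.
- move=> c y [p [r [Ap ->]]]; exists (c * p), (c * r); split; first exact: idM.
  by rewrite mulrDr mulrA.
Qed.

Lemma nil_loc (M : R -> Prop) : krull_dim_eq R 0 -> maximal_ideal M ->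
  forall a, M a -> exists t n, ~ M t /\ t * a ^+ n = 0.
Proof.
move=> [_ hk] hM a Ma; apply: NNPP => H.
have H' : forall t n, ~ M t -> t * a ^+ n <> 0.
  by move=> t n nMt e; apply: H; exists t, n.
pose S := fun x => exists t n, ~ M t /\ x = t * a ^+ n.
have hI : is_ideal (fun x : R => x = 0).
  by split => // [x y -> ->|c x ->]; rewrite ?addr0 ?mulr0.
have hIS : forall x, x = 0 -> ~ S x.
  by move=> x -> [t [n [nMt ex]]]; exact: H' t n nMt (esym ex).
have [A [hA _ AS Amax]] := @zorn_ideal R (fun x => x = 0) S hI hIS.
have nMM : forall u v, ~ M u -> ~ M v -> ~ M (u * v) by move=> u v; apply: max_nMM.
have primeA : prime_ideal A.
  split => //.
    move=> A1; apply: (AS 1 A1); exists 1, 0%N; rewrite expr0 mulr1; split => //.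
    exact: max_nM1.
  move=> x y Axy; apply: NNPP => /not_or_and [nAx nAy].
  have ex_S : forall z, ~ A z -> exists p r t n, [/\ A p, ~ M t & t * a ^+ n = p + r * z].
    move=> z nAz; apply: NNPP => hne; apply: nAz.
    apply: (Amax _ (ideal_add z hA)).
    - by move=> w Aw; exists w, 0; rewrite mul0r addr0.
    - move=> w [p [r [Ap ->]]] [t [n [nMt e]]]; apply: hne.
      by exists p, r, t, n; split.
    - by exists 0, 1; rewrite mul1r add0r; split => //; apply: id0.
  have [p [r [t [n [Ap nMt e]]]]] := ex_S x nAx.
  have [p' [r' [t' [n' [Ap' nMt' e']]]]] := ex_S y nAy.
  apply: (AS ((t * t') * a ^+ (n + n'))); last first.
    by exists (t * t'), (n + n')%N; split => //; apply: (nMM).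
  have -> : t * t' * a ^+ (n + n') = (t * a ^+ n) * (t' * a ^+ n').
    by rewrite exprD; ring.
  rewrite e e'.
  have -> : (p + r * x) * (p' + r' * y) = p * (p' + r' * y) + (r * x * p' + r * r' * (x * y)) by ring.
  apply: idD => //; first by apply: idMr.
  by apply: idD => //; [apply: idM | apply: idM].
have primeM : prime_ideal M.
  split; [exact: max_ideal | exact: max_nM1 | exact: max_prime].
apply: hk; exists (fun i => if i == 0%N then A else M); split.
  by case=> [|[|i]] //.
case=> [|i] // _; split.
  move=> x Ax; apply: NNPP => nMx; apply: (AS x Ax).
  by exists x, 0%N; rewrite expr0 mulr1.
exists a; split => // Aa; apply: (AS a Aa).
exists 1, 1%N; rewrite expr1 mul1r; split => //; exact: max_nM1.
Qed.

Lemma chain_loc (M : R -> Prop) : arithmetic R -> maximal_ideal M ->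
  forall a b, exists u c, ~ M u /\ (u * a = c * b \/ u * b = c * a).
Proof.
move=> har hM a b.
have nMM : forall u v, ~ M u -> ~ M v -> ~ M (u * v) by move=> u v; apply: max_nMM.
pose I x := fun p : R * R => ~ M p.2 /\ exists c u, ~ M u /\ u * p.1 = c * x.
have hI : forall x, loc_ideal M (I x).
  move=> x; split.
  - by move=> p [].
  - move=> p q hp hq [v [nMv hv]] [_ [c [u [nMu e]]]]; split => //.
    exists (c * v * q.2), (v * u * p.2); split; first by apply: (nMM) => //; apply: (nMM).
    have hv' : v * (p.1 * q.2) = v * (q.1 * p.2).
      by apply/eqP; rewrite -subr_eq0 -mulrBr hv.
    transitivity (u * (v * (q.1 * p.2))); first by ring.
    rewrite -hv'; transitivity ((u * p.1) * v * q.2); first by ring.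
    by rewrite e; ring.
  - split; first by move=> /=; exact: max_nM1.
    by exists 0, 1; rewrite mul0r mulr0; split => //; exact: max_nM1.
  - move=> p q [hp [c [u [nMu e]]]] [hq [c' [u' [nMu' e']]]]; split; first exact: nMM.
    exists (c * u' * q.2 + c' * u * p.2), (u * u'); split; first exact: nMM.
    transitivity ((u * p.1) * u' * q.2 + (u' * q.1) * u * p.2); first by rewrite /=; ring.
    by rewrite e e'; ring.
  - move=> c p hc [hp [c0 [u [nMu e]]]]; split; first exact: nMM.
    exists (p.1 * 0 + c.1 * c0), u; split => //.
    transitivity (c.1 * (u * p.1)); first by rewrite /=; ring.
    by rewrite e; ring.
have Ia : I a (a, 1).
  split; first exact: max_nM1.
  by exists 1, 1; rewrite !mul1r; split => //; exact: max_nM1.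
have Ib : I b (b, 1).
  split; first exact: max_nM1.
  by exists 1, 1; rewrite !mul1r; split => //; exact: max_nM1.
case: (har M hM (I a) (I b) (hI a) (hI b)) => [H|H].
  by have [_ [c [u [nMu e]]]] := H _ Ia; exists u, c; split => //; left.
by have [_ [c [u [nMu e]]]] := H _ Ib; exists u, c; split => //; right.
Qed.

Lemma unit_loc (M : R -> Prop) : krull_dim_eq R 0 -> maximal_ideal M ->
  forall u, ~ M u -> exists b t, ~ M t /\ t * (u * b - 1) = 0.
Proof.
move=> hk hM u nMu.
have [m [b [Mm e]]] := max_inv hM nMu.
have [t [n [nMt htm]]] := nil_loc hk hM Mm.
exists (b * \sum_(i < n) m ^+ i), t; split => //.
have e' : u * b = 1 - m by rewrite e; ring.
have -> : u * (b * \sum_(i < n) m ^+ i) - 1 = - m ^+ n.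
  rewrite mulrA e'.
  have := subrX1 m n; move=> h.
  have -> : (1 - m) * \sum_(i < n) m ^+ i = - ((m - 1) * \sum_(i < n) m ^+ i) by ring.
  rewrite -h; ring.
by rewrite mulrN htm oppr0.
Qed.

End Loc.

Section Cong.
Variable R : comNzRingType.
Variable E : R -> Prop.
Hypothesis hE : is_ideal E.

Definition mxI m n (X : 'M[R]_(m,n)) := forall i j, E (X i j).
Definition cg m n (X Y : 'M[R]_(m,n)) := mxI (X - Y).

Lemma mxI0 m n : mxI (0 : 'M_(m,n)).
Proof. by move=> i j; rewrite mxE; apply: id0. Qed.
Lemma mxID m n (X Y : 'M_(m,n)) : mxI X -> mxI Y -> mxI (X + Y).
Proof. by move=> hX hY i j; rewrite mxE; apply: idD. Qed.
Lemma mxIN m n (X : 'M_(m,n)) : mxI X -> mxI (- X).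
Proof. by move=> hX i j; rewrite mxE; apply: idN. Qed.
Lemma mxIml m n p (X : 'M_(m,n)) (Y : 'M_(n,p)) : mxI Y -> mxI (X *m Y).
Proof.
move=> hY i j; rewrite mxE; apply: (big_ind E) => //; first exact: id0.
  by move=> x y; apply: idD.
by move=> k _; apply: idM.
Qed.
Lemma mxImr m n p (X : 'M_(m,n)) (Y : 'M_(n,p)) : mxI X -> mxI (X *m Y).
Proof.
move=> hX i j; rewrite mxE; apply: (big_ind E) => //; first exact: id0.
  by move=> x y; apply: idD.
by move=> k _; apply: idMr.
Qed.

Lemma mxI_block m1 m2 n1 n2 (A : 'M_(m1,n1)) (B : 'M_(m1,n2)) (C : 'M_(m2,n1))
  (D : 'M_(m2,n2)) : mxI A -> mxI B -> mxI C -> mxI D -> mxI (block_mx A B C D).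
Proof.
move=> hA hB hC hD i j.
rewrite -[i](splitK) -[j](splitK).
case: (split i) => i'; case: (split j) => j' /=.
- by rewrite block_mxEul.
- by rewrite block_mxEur.
- by rewrite block_mxEdl.
- by rewrite block_mxEdr.
Qed.

Lemma cg_refl m n (X : 'M_(m,n)) : cg X X.
Proof. by rewrite /cg subrr; apply: mxI0. Qed.
Lemma cg_sym m n (X Y : 'M_(m,n)) : cg X Y -> cg Y X.
Proof. by rewrite /cg => h; rewrite -opprB; apply: mxIN. Qed.
Lemma cg_trans m n (X Y Z : 'M_(m,n)) : cg X Y -> cg Y Z -> cg X Z.
Proof.
by rewrite /cg => h1 h2; have := mxID h1 h2; rewrite addrA subrK.
Qed.
Lemma cg_eq m n (X Y : 'M_(m,n)) : X = Y -> cg X Y.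
Proof. by move=> ->; apply: cg_refl. Qed.
Lemma cg_mul m n p (X X' : 'M_(m,n)) (Y Y' : 'M_(n,p)) :
  cg X X' -> cg Y Y' -> cg (X *m Y) (X' *m Y').
Proof.
rewrite /cg => h1 h2.
have -> : X *m Y - X' *m Y' = (X - X') *m Y + X' *m (Y - Y').
  by rewrite mulmxBl mulmxBr addrA subrK.
by apply: mxID; [apply: mxImr | apply: mxIml].
Qed.
Lemma cg_add m n (X X' Y Y' : 'M_(m,n)) : cg X X' -> cg Y Y' -> cg (X + Y) (X' + Y').
Proof.
rewrite /cg => h1 h2.
have -> : X + Y - (X' + Y') = (X - X') + (Y - Y') by rewrite opprD addrACA.
exact: mxID.
Qed.
Lemma cg_block m1 m2 n1 n2 (A A' : 'M_(m1,n1)) (B B' : 'M_(m1,n2)) (C C' : 'M_(m2,n1))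
  (D D' : 'M_(m2,n2)) : cg A A' -> cg B B' -> cg C C' -> cg D D' ->
  cg (block_mx A B C D) (block_mx A' B' C' D').
Proof.
rewrite /cg => h1 h2 h3 h4.
by rewrite opp_block_mx add_block_mx; apply: mxI_block.
Qed.

Hypothesis htot : forall a b : R, exists c, E (a - c * b) \/ E (b - c * a).

Lemma min_div (s : seq R) : exists h, (h = 0 \/ h \in s) /\
   forall g, g \in s -> exists c, E (g - c * h).
Proof.
elim: s => [|x s [h [hs H]]]; first by exists 0; split; [left|].
have [c [hc|hc]] := htot x h.
  exists h; split; first by case: hs => [->|hs]; [left|right; rewrite inE hs orbT].
  move=> g; rewrite inE => /orP[/eqP ->|gs]; first by exists c.
  exact: H.
exists x; split; first by right; rewrite inE eqxx.
move=> g; rewrite inE => /orP[/eqP ->|gs].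
  by exists 1; rewrite mul1r subrr; apply: id0.
have [c' hc'] := H g gs; exists (c' * c).
have -> : g - c' * c * x = (g - c' * h) + c' * (h - c * x) by ring.
by apply: idD => //; apply: idM.
Qed.

Definition diagr (d : nat -> R) m n : 'M[R]_(m,n) :=
  \matrix_(i, j) if (i : nat) == j then d i else 0.

Lemma tperm_mx_inv n (i j : 'I_n) : tperm_mx i j *m tperm_mx i j = 1%:M :> 'M[R]_n.
Proof. by rewrite /tperm_mx -perm_mxM tperm2 perm_mx1. Qed.

Lemma block_diagr m n (a : 'M[R]_1) (d : nat -> R) :
  block_mx a 0 0 (diagr d m n) =
  diagr (fun k => if k is k'.+1 then d k' else a 0 0) (1 + m) (1 + n).
Proof.
apply/matrixP => i j.
rewrite -[i](splitK) -[j](splitK).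
case: (split i) => i'; case: (split j) => j' /=.
- by rewrite block_mxEul !mxE /= !ord1.
- by rewrite block_mxEur !mxE /= ord1.
- by rewrite block_mxEdl !mxE /= ord1 /=.
- by rewrite block_mxEdr !mxE /= eqSS.
Qed.

Definition bd m (X : 'M[R]_m) : 'M_(1 + m) := block_mx (1%:M : 'M_1) 0 0 X.

Lemma bd_mul m (X Y : 'M[R]_m) : bd X *m bd Y = bd (X *m Y).
Proof. by rewrite /bd mulmx_block !mulmx0 !mul0mx !addr0 !add0r mulmx1. Qed.
Lemma bd1 m : bd (1%:M : 'M[R]_m) = 1%:M.
Proof. by rewrite /bd -scalar_mx_block. Qed.
Lemma cg_bd m (X Y : 'M[R]_m) : cg X Y -> cg (bd X) (bd Y).
Proof. by move=> h; apply: cg_block => //; apply: cg_refl. Qed.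

Lemma smith m n (A : 'M[R]_(m,n)) : exists (P P' : 'M_m) (Q Q' : 'M_n) (d : nat -> R),
  [/\ cg (P *m P') 1%:M, cg (P' *m P) 1%:M, cg (Q *m Q') 1%:M, cg (Q' *m Q) 1%:M &
      cg (P *m A *m Q) (diagr d m n)].
Proof.
elim: m n A => [|m IH] n A.
  exists 1%:M, 1%:M, 1%:M, 1%:M, (fun _ => 0).
  by split; apply: cg_eq; rewrite ?mulmx1 // [LHS]flatmx0 [RHS]flatmx0.
case: n A => [|n] A.
  exists 1%:M, 1%:M, 1%:M, 1%:M, (fun _ => 0).
  by split; apply: cg_eq; rewrite ?mulmx1 // [LHS]thinmx0 [RHS]thinmx0.
have [h [hs H]] := min_div [seq A p.1 p.2 | p <- enum {: 'I_m.+1 * 'I_n.+1}].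
have Hall : forall i j, exists c, E (A i j - c * h).
  move=> i j; apply: H; apply/mapP; exists (i, j) => //; by rewrite mem_enum.
case: hs => [h0|hs].
  exists 1%:M, 1%:M, 1%:M, 1%:M, (fun _ => 0).
  split; try by apply: cg_eq; rewrite mulmx1.
  rewrite mul1mx mulmx1 => i j; rewrite !mxE.
  have [c hc] := Hall i j; move: hc; rewrite h0 mulr0 !subr0.
  by case: (_ == _); rewrite subr0.
have [[i0 j0] _ eh] := mapP hs; rewrite /= in eh.
pose P1 := tperm_mx i0 0 : 'M[R]_m.+1.
pose Q1 := tperm_mx j0 0 : 'M[R]_n.+1.
have [A1 eqA1] : {A1 | A1 = P1 *m A *m Q1} by exists (P1 *m A *m Q1).
have eA1 : forall i j, A1 i j = A (tperm i0 0 i) (tperm j0 0 j).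
  by move=> i j; rewrite eqA1 /P1 /Q1 -xrowE -xcolE !mxE.
have H1 : forall i j, exists c, E (A1 i j - c * h) by move=> i j; rewrite eA1.
pose B : 'M_(1 + m, 1 + n) := A1.
pose a := ulsubmx B. pose r := ursubmx B. pose cl := dlsubmx B. pose A2 := drsubmx B.
have ea : a 0 0 = h.
  rewrite /a /B !mxE.
  have -> : lshift m (0 : 'I_1) = 0 :> 'I_m.+1 by apply: val_inj.
  have -> : lshift n (0 : 'I_1) = 0 :> 'I_n.+1 by apply: val_inj.
  by rewrite eA1 !tpermR.
have [fr Hfr] : {f : 'I_n -> R & forall j, E (r 0 j - f j * h)}.
  apply: (@boolp.choice _ _ (fun j c => E (r 0 j - c * h))) => j; rewrite /r !mxE; exact: H1.
have [fc Hfc] : {f : 'I_m -> R & forall i, E (cl i 0 - f i * h)}.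
  apply: (@boolp.choice _ _ (fun i c => E (cl i 0 - c * h))) => i; rewrite /cl !mxE; exact: H1.
pose xr : 'M_(1, n) := \row_j fr j.
pose yc : 'M_(m, 1) := \col_i fc i.
pose L : 'M_(1 + m) := block_mx 1%:M 0 (- yc) 1%:M.
pose L' : 'M_(1 + m) := block_mx 1%:M 0 yc 1%:M.
pose U : 'M_(1 + n) := block_mx 1%:M (- xr) 0 1%:M.
pose U' : 'M_(1 + n) := block_mx 1%:M xr 0 1%:M.
pose A3 := A2 - yc *m r - (cl - yc *m a) *m xr.
have eLBU : L *m B *m U = block_mx a (r - a *m xr) (cl - yc *m a) A3.
  rewrite -[B](submxK) /L /U !mulmx_block.
  rewrite !mul1mx !mul0mx !mulmx0 !mulmx1 ?addr0 ?add0r ?mulNmx ?mulmxN.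
  rewrite /A3 /a /r /cl /A2; congr block_mx.
  - exact: addrC.
  - exact: addrC.
  - rewrite [LHS]addrC; congr (_ + _); [exact: addrC | by rewrite addrC].
have eB : forall x y : 'I_1, B (lshift m x) (lshift n y) = h.
  by move=> x y; rewrite (ord1 x) (ord1 y) -ea /a !mxE.
have cg_top : cg (L *m B *m U) (block_mx a 0 0 A3).
  rewrite eLBU; apply: cg_block; [apply: cg_refl | | | apply: cg_refl].
  - move=> i j; rewrite (ord1 i); have := Hfr j.
    by rewrite !mxE big_ord1 !mxE eB subr0 mulrC.
  - move=> i j; rewrite (ord1 j); have := Hfc i.
    by rewrite !mxE big_ord1 !mxE eB subr0.
have [P3 [P3' [Q3 [Q3' [d3 [c1 c2 c3 c4 c5]]]]]] := IH n A3.
have LL' : L *m L' = 1%:M.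
  by rewrite /L /L' mulmx_block !mul1mx !mulmx1 !mul0mx !mulmx0 !addr0 !add0r ?addNr ?addrN -scalar_mx_block.
have L'L : L' *m L = 1%:M.
  by rewrite /L /L' mulmx_block !mul1mx !mulmx1 !mul0mx !mulmx0 !addr0 !add0r ?addNr ?addrN -scalar_mx_block.
have UU' : U *m U' = 1%:M.
  by rewrite /U /U' mulmx_block !mul1mx !mulmx1 !mul0mx !mulmx0 !addr0 !add0r ?addNr ?addrN -scalar_mx_block.
have U'U : U' *m U = 1%:M.
  by rewrite /U /U' mulmx_block !mul1mx !mulmx1 !mul0mx !mulmx0 !addr0 !add0r ?addNr ?addrN -scalar_mx_block.
exists (bd P3 *m L *m P1), (P1 *m L' *m bd P3'), (Q1 *m U *m bd Q3), (bd Q3' *m U' *m Q1).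
exists (fun k => if k is k'.+1 then d3 k' else h).
split.
- have -> : bd P3 *m L *m P1 *m (P1 *m L' *m bd P3') = bd P3 *m (L *m (P1 *m P1) *m L') *m bd P3'.
    by rewrite !mulmxA.
  rewrite tperm_mx_inv mulmx1 LL' mulmx1 bd_mul.
  by apply: cg_trans (cg_bd c1) _; rewrite bd1; apply: cg_refl.
- have -> : P1 *m L' *m bd P3' *m (bd P3 *m L *m P1) = P1 *m (L' *m (bd P3' *m bd P3) *m L) *m P1.
    by rewrite !mulmxA.
  rewrite bd_mul.
  apply: cg_trans (_ : cg _ (P1 *m (L' *m 1%:M *m L) *m P1)) _.
    by apply: cg_mul; [apply: cg_mul; [apply: cg_refl|apply: cg_mul; [apply: cg_mul; [apply: cg_refl|]|apply: cg_refl]]|apply: cg_refl]; rewrite -bd1; apply: cg_bd.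
  by rewrite mulmx1 L'L mulmx1 tperm_mx_inv; apply: cg_refl.
- have -> : Q1 *m U *m bd Q3 *m (bd Q3' *m U' *m Q1) = Q1 *m (U *m (bd Q3 *m bd Q3') *m U') *m Q1.
    by rewrite !mulmxA.
  rewrite bd_mul.
  apply: cg_trans (_ : cg _ (Q1 *m (U *m 1%:M *m U') *m Q1)) _.
    by apply: cg_mul; [apply: cg_mul; [apply: cg_refl|apply: cg_mul; [apply: cg_mul; [apply: cg_refl|]|apply: cg_refl]]|apply: cg_refl]; rewrite -bd1; apply: cg_bd.
  by rewrite mulmx1 UU' mulmx1 tperm_mx_inv; apply: cg_refl.
- have -> : bd Q3' *m U' *m Q1 *m (Q1 *m U *m bd Q3) = bd Q3' *m (U' *m (Q1 *m Q1) *m U) *m bd Q3.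
    by rewrite !mulmxA.
  rewrite tperm_mx_inv mulmx1 U'U mulmx1 bd_mul.
  by apply: cg_trans (cg_bd c4) _; rewrite bd1; apply: cg_refl.
- have -> : bd P3 *m L *m P1 *m A *m (Q1 *m U *m bd Q3) = bd P3 *m (L *m B *m U) *m bd Q3.
    by rewrite /B eqA1 !mulmxA.
  apply: cg_trans (_ : cg _ (bd P3 *m block_mx a 0 0 A3 *m bd Q3)) _.
    by apply: cg_mul; [apply: cg_mul; [apply: cg_refl|exact: cg_top]|apply: cg_refl].
  have -> : bd P3 *m block_mx a 0 0 A3 *m bd Q3 = block_mx a 0 0 (P3 *m A3 *m Q3).
    by rewrite /bd !mulmx_block !mul1mx !mulmx1 !mul0mx !mulmx0 !addr0 !add0r mul0mx.
  apply: cg_trans (_ : cg _ (block_mx a 0 0 (diagr d3 m n))) _.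
    by apply: cg_block => //; apply: cg_refl.
  by rewrite block_diagr ea; apply: cg_refl.
Qed.

End Cong.

Section LzSec.
Variable R : comNzRingType.
Variable M : R -> Prop.
Hypothesis hM : maximal_ideal M.

Definition Lz (x : R) := exists t, ~ M t /\ t * x = 0.

Lemma nMM u v : ~ M u -> ~ M v -> ~ M (u * v).
Proof. exact: max_nMM. Qed.
Lemma nM1 : ~ M 1.
Proof. exact: max_nM1. Qed.
Lemma nMl u v : ~ M (u * v) -> ~ M u.
Proof. by move=> h Mu; apply: h; apply: idMr => //; exact: max_ideal. Qed.
Lemma nMr u v : ~ M (u * v) -> ~ M v.
Proof. by rewrite mulrC; apply: nMl. Qed.
Lemma nMX u n : ~ M u -> ~ M (u ^+ n).
Proof. by move=> h; elim: n => [|n IH]; rewrite ?expr0 ?exprS; [exact: nM1|exact: nMM]. Qed.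

Lemma Lz_ideal : is_ideal Lz.
Proof.
split.
- by exists 1; rewrite mulr0; split => //; exact: nM1.
- move=> x y [t [nt ht]] [t' [nt' ht']]; exists (t * t'); split; first exact: nMM.
  have -> : t * t' * (x + y) = t' * (t * x) + t * (t' * y) by ring.
  by rewrite ht ht' !mulr0 addr0.
- move=> a x [t [nt ht]]; exists t; split => //; by rewrite mulrCA ht mulr0.
Qed.

Lemma unif m n (X : 'M[R]_(m,n)) : mxI Lz X -> exists t, ~ M t /\ t *: X = 0.
Proof.
move=> hX.
have [f hf] : {f : 'I_m * 'I_n -> R & forall p, ~ M (f p) /\ f p * X p.1 p.2 = 0}.
  apply: (@boolp.choice _ _ (fun p t => ~ M t /\ t * X p.1 p.2 = 0)) => p.
  exact: hX.
exists (\prod_p f p); split.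
  apply: (big_ind (fun x => ~ M x)) => //; first exact: nM1.
    by move=> x y; apply: nMM.
  by move=> p _; case: (hf p).
apply/matrixP => i j; rewrite !mxE (bigD1 (i, j)) //= mulrAC.
by case: (hf (i, j)) => _ /= ->; rewrite mul0r.
Qed.

Lemma unif_cg m n (X Y : 'M[R]_(m,n)) : cg Lz X Y -> exists t, ~ M t /\ t *: X = t *: Y.
Proof.
move=> /unif [t [nt ht]]; exists t; split => //.
by apply/eqP; rewrite -subr_eq0 -scalerBr ht.
Qed.

Hypothesis hk : krull_dim_eq R 0.
Hypothesis har : arithmetic R.

Lemma tot_mod a b : exists c, Lz (a - c * b) \/ Lz (b - c * a).
Proof.
have [u [c [nu [e|e]]]] := chain_loc har hM a b.
  have [b' [t [nt ht]]] := unit_loc hk hM nu.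
  exists (b' * c); left; exists t; split => //.
  have -> : a - b' * c * b = - ((u * b' - 1) * a) + b' * (u * a - c * b) by ring.
  by rewrite e subrr mulr0 addr0 mulrN mulrA ht mul0r oppr0.
have [b' [t [nt ht]]] := unit_loc hk hM nu.
exists (b' * c); right; exists t; split => //.
have -> : b - b' * c * a = - ((u * b' - 1) * b) + b' * (u * b - c * a) by ring.
by rewrite e subrr mulr0 addr0 mulrN mulrA ht mul0r oppr0.
Qed.

Lemma da_lemma (d h rho th : R) : ~ M rho -> ~ M th ->
  (forall z, z * d = 0 -> exists c, rho * z = c * h) ->
  forall y, th * (y * h) = 0 -> exists t c, ~ M t /\ t * y = c * d.
Proof.
move=> nrho nth AnnU y hy.
have [u [c [nu [e|e]]]] := chain_loc har hM y d.
  by exists u, c.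
case: (classic (M c)) => Mc.
  have [t0 [n [nt0 ht0]]] := nil_loc hk hM Mc.
  suff: forall j, (j <= n)%N -> exists t, ~ M t /\ t * (y * c ^+ (n - j)) = 0.
    move=> /(_ n (leqnn n)) [t [nt]]; rewrite subnn expr0 mulr1 => ht.
    by exists t, 0; rewrite mul0r.
  elim=> [|j IH] hj.
    by exists t0; split => //; rewrite subn0 mulrCA ht0 mulr0.
  have [t [nt ht]] := IH (ltnW hj).
  have ej : (n - j = (n - j.+1).+1)%N by rewrite subnS prednK // subn_gt0.
  rewrite ej exprS in ht.
  pose z := t * u * c ^+ (n - j.+1).
  have hz : z * d = 0.
    have -> : z * d = t * (c ^+ (n - j.+1) * (u * d)) by rewrite /z; ring.
    rewrite e.
    have -> : t * (c ^+ (n - j.+1) * (c * y)) = t * (y * (c * c ^+ (n - j.+1))) by ring.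
    exact: ht.
  have [e' he'] := AnnU z hz.
  exists (th * rho * t * u); split.
    by apply: nMM => //; apply: nMM => //; apply: nMM.
  have -> : th * rho * t * u * (y * c ^+ (n - j.+1)) = (rho * z) * (th * y) by rewrite /z; ring.
  rewrite he'.
  have -> : e' * h * (th * y) = e' * (th * (y * h)) by ring.
  by rewrite hy mulr0.
have [b [s [ns hs]]] := unit_loc hk hM Mc.
exists s, (s * b * u); split => //.
have -> : s * y = s * b * (c * y) - (s * (c * b - 1)) * y by ring.
by rewrite hs mul0r subr0 -e mulrA.
Qed.

End LzSec.

Section DiagR.
Variable R : comNzRingType.
Variables k0 k1 : nat.
Variable d : nat -> R.
Definition dd (i : 'I_k1) : R := if (i < k0)%N then d i else 0.

Lemma mulD_entry p (Z : 'M[R]_(p, k1)) a (j : 'I_k0) :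
  (Z *m diagr d k1 k0) a j = \sum_(i : 'I_k1 | (i : nat) == j) Z a i * d i.
Proof.
rewrite mxE [RHS]big_mkcond; apply: eq_bigr => i _; rewrite mxE.
by case: ifP; rewrite ?mulr0.
Qed.

Lemma zD0 p (Z : 'M[R]_(p, k1)) : (forall a i, Z a i * dd i = 0) -> Z *m diagr d k1 k0 = 0.
Proof.
move=> hZ; apply/matrixP => a j; rewrite mulD_entry mxE big1 // => i /eqP eij.
by have := hZ a i; rewrite /dd eij ltn_ord.
Qed.

Lemma zD0' p (Z : 'M[R]_(p, k1)) : Z *m diagr d k1 k0 = 0 -> forall a i, Z a i * dd i = 0.
Proof.
move=> hZ a i; rewrite /dd; case: ifP => hi; last by rewrite mulr0.
have := congr1 (fun X : 'M_(p,k0) => X a (Ordinal hi)) hZ; rewrite /= mulD_entry mxE.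
by rewrite (big_pred1 i).
Qed.
End DiagR.

Lemma scl (R : comNzRingType) (t s : R) m n (X Y : 'M[R]_(m,n)) :
  t *: X = t *: Y -> (s * t) *: X = (s * t) *: Y.
Proof. by move=> e; rewrite -!scalerA e. Qed.

Section Local.
Variable R : comNzRingType.
Variables k0 k1 k2 : nat.
Variable A0 : 'M[R]_(k1, k0).
Variable A1 : 'M[R]_(k2, k1).
Hypothesis hex : forall u : 'rV[R]_k1, u *m A0 = 0 <-> exists v, u = v *m A1.
Hypothesis hk : krull_dim_eq R 0.
Hypothesis har : arithmetic R.

Lemma A1A0 : A1 *m A0 = 0.
Proof.
apply/row_matrixP => j; rewrite row_mul row0; apply/hex.
by exists (delta_mx 0 j); rewrite -rowE.
Qed.

Lemma local_data (M : R -> Prop) : maximal_ideal M ->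
  exists (P P' : 'M[R]_k1) (h dd : 'I_k1 -> R) (X : 'M[R]_(k2, k1)) (Y : 'M[R]_(k1, k2))
    (th rho ka : R),
  [/\ [/\ ~ M th, ~ M rho & ~ M ka], th *: (P *m P') = th *: 1%:M,
      (forall i y, y * dd i = 0 -> exists c, rho * y = c * h i),
      (forall i, th * (h i * dd i) = 0) &
      (ka *: A1 = X *m (diag_mx (\row_i h i) *m P) /\
       th *: (diag_mx (\row_i h i) *m P) = Y *m A1)].
Proof.
move=> hM.
have [P [P' [Q [Q' [d [c1 c2 c3 c4 c5]]]]]] :=
  smith (Lz_ideal hM) (tot_mod hM hk har) A0.
have [t1 [n1 e1]] := unif_cg hM c1.
have [t2 [n2 e2]] := unif_cg hM c2.
have [t3 [n3 e3]] := unif_cg hM c3.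
have [t5 [n5 e5]] := unif_cg hM c5.
pose s := t1 * t2 * t3 * t5.
have ns : ~ M s by repeat apply: nMM.
have s1 : s *: (P *m P') = s *: 1%:M.
  by rewrite (_ : s = (t2 * t3 * t5) * t1); [exact: scl | rewrite /s; ring].
have s2 : s *: (P' *m P) = s *: 1%:M.
  by rewrite (_ : s = (t1 * t3 * t5) * t2); [exact: scl | rewrite /s; ring].
have s3 : s *: (Q *m Q') = s *: 1%:M.
  by rewrite (_ : s = (t1 * t2 * t5) * t3); [exact: scl | rewrite /s; ring].
have s5 : s *: (P *m A0 *m Q) = s *: diagr d k1 k0.
  by rewrite (_ : s = (t1 * t2 * t3) * t5); [exact: scl | rewrite /s; ring].
clearbody s.
pose D := diagr d k1 k0.
have PA0 : (s * s) *: (P *m A0) = (s * s) *: (D *m Q').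
  transitivity (s *: (P *m A0 *m (s *: (Q *m Q')))).
    by rewrite s3 -scalemxAr mulmx1 scalerA.
  rewrite -scalemxAr mulmxA scalemxAl s5 -scalemxAl.
  by rewrite !scalerA.
pose Gm := A1 *m P'.
have GmD : ((s * s) *: Gm) *m D = 0.
  transitivity (s *: (A1 *m P' *m (s *: D))).
    by rewrite -scalemxAr scalerA -scalemxAl.
  rewrite /D -s5.
  have -> : A1 *m P' *m (s *: (P *m A0 *m Q)) = A1 *m (s *: (P' *m P)) *m A0 *m Q.
    by rewrite -!scalemxAr -!scalemxAl !mulmxA.
  by rewrite s2 -scalemxAr mulmx1 -!scalemxAl A1A0 mul0mx !scaler0.
have [h Hh] : {h : 'I_k1 -> R & forall i, (h i = 0 \/ exists j, h i = Gm j i) /\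
     forall j, exists c, Lz M (Gm j i - c * h i)}.
  apply: (@boolp.choice _ _ (fun i hi => (hi = 0 \/ exists j, hi = Gm j i) /\
     forall j, exists c, Lz M (Gm j i - c * hi))) => i.
  have [hi [hs H]] := min_div (Lz_ideal hM) (tot_mod hM hk har) [seq Gm j i | j <- enum 'I_k2].
  exists hi; split.
    by case: hs => [->|/mapP [j _ ->]]; [left | right; exists j].
  by move=> j; apply: H; apply/mapP; exists j => //; rewrite mem_enum.
have [cf Hcf] : {cf : 'I_k2 * 'I_k1 -> R & forall p, Lz M (Gm p.1 p.2 - cf p * h p.2)}.
  apply: (@boolp.choice _ _ (fun p c => Lz M (Gm p.1 p.2 - c * h p.2))) => p.
  by case: (Hh p.2) => _ /(_ p.1).
pose W := \matrix_(j, i) (Gm j i - cf (j, i) * h i).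
have [tau [ntau htau]] : exists t, ~ M t /\ t *: W = 0.
  by apply: unif => // j i; rewrite mxE; exact: (Hcf (j, i)).
have Htau : forall j i, tau * Gm j i = tau * cf (j, i) * h i.
  move=> j i; have := congr1 (fun X : 'M_(k2,k1) => X j i) htau; rewrite /= !mxE => e.
  by apply/eqP; rewrite -subr_eq0 -mulrA -mulrBr e.
have Hhdd : forall i, (s * s) * (h i * dd k0 d i) = 0.
  move=> i; case: (Hh i) => [[-> | [j ->]] _]; first by rewrite mul0r mulr0.
  by have := zD0' GmD j i; rewrite mxE mulrA.
have AnnU : forall i y, y * dd k0 d i = 0 -> exists c, (tau * (s * s * s)) * y = c * h i.
  move=> i y hy.
  pose z : 'rV_k1 := \row_k (if k == i then y else 0).
  have zD : z *m D = 0.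
    apply: zD0 => a k; rewrite mxE; case: eqP => [->|_]; [exact: hy | by rewrite mul0r].
  have [v hv] : exists v, (s * s) *: (z *m P) = v *m A1.
    apply/hex.
    by rewrite -scalemxAl -mulmxA scalemxAr PA0 -scalemxAr mulmxA zD mul0mx scaler0.
  have ez : (s * s * s) *: z = s *: (v *m Gm).
    rewrite /Gm mulmxA -hv.
    transitivity ((s * s) *: (z *m (s *: (P *m P')))).
      by rewrite s1 -scalemxAr mulmx1 scalerA.
    by rewrite -scalemxAr -scalemxAl !scalerA mulmxA mulrC.
  have := congr1 (fun X : 'rV_k1 => X 0 i) ez; rewrite /= !mxE eqxx => e.
  exists (s * \sum_j v 0 j * (tau * cf (j, i))).
  transitivity (s * (tau * \sum_j v 0 j * Gm j i)).
    by rewrite -mulrA e; ring.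
  rewrite mulr_sumr -mulrA mulr_suml; congr (_ * _); apply: eq_bigr => j _.
  by rewrite mulrCA Htau; ring.
pose hr : 'rV_k1 := \row_i h i.
pose B := diag_mx hr *m P.
have hD : ((s * s) *: diag_mx hr) *m D = 0.
  apply: zD0 => a i; rewrite !mxE; case: eqP => [->|_]; last by rewrite mulr0n mulr0 mul0r.
  by rewrite mulr1n -mulrA Hhdd.
have BA0 : ((s * s * s) *: B) *m A0 = 0.
  rewrite /B -scalemxAl -mulmxA -mulrA -scalerA scalemxAr PA0 -scalemxAr mulmxA.
  by rewrite [(s * s) *: _]scalemxAl [(s * s) *: _]scalemxAl hD mul0mx scaler0.
have [fy Hfy] : {f : 'I_k1 -> 'rV_k2 & forall i, row i ((s * s * s) *: B) = f i *m A1}.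
  apply: (@boolp.choice _ _ (fun i v => row i ((s * s * s) *: B) = v *m A1)) => i.
  by apply/hex; rewrite -row_mul BA0 row0.
pose Y := \matrix_(i, j) fy i 0 j.
have eY : (s * s * s) *: B = Y *m A1.
  apply/row_matrixP => i; rewrite row_mul Hfy; congr (_ *m _).
  by apply/rowP => j; rewrite !mxE.
have [fc Hfc] : {f : 'I_k2 * 'I_k1 -> R &
   forall p, (tau * (s * s * s)) * ((s * s) * Gm p.1 p.2) = f p * h p.2}.
  apply: (@boolp.choice _ _ (fun p c => (tau * (s * s * s)) * ((s * s) * Gm p.1 p.2) = c * h p.2)) => p.
  by apply: AnnU; have := zD0' GmD p.1 p.2; rewrite mxE.
pose C := \matrix_(j, i) fc (j, i).
have eC : ((tau * (s * s * s)) * (s * s)) *: Gm = C *m diag_mx hr.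
  apply/matrixP => j i; rewrite mul_mx_diag [in RHS]mxE [C _ _]mxE [hr _ _]mxE -(Hfc (j, i)) mxE mulrA /Gm /=; ring.
have eX : ((tau * (s * s * s)) * (s * s) * s) *: A1 = (s *: C) *m B.
  transitivity (((tau * (s * s * s)) * (s * s)) *: (A1 *m (s *: (P' *m P)))).
    by rewrite s2 -scalemxAr mulmx1 scalerA.
  by rewrite -scalemxAr mulmxA -/Gm scalerA mulrC -scalerA scalemxAl eC /B -scalemxAl mulmxA.
exists P, P', h, (dd k0 d), (s *: C), Y, (s * s * s), (tau * (s * s * s)),
  ((tau * (s * s * s)) * (s * s) * s).
have nss : ~ M (s * s) by apply: nMM.
have nsss : ~ M (s * s * s) by apply: nMM.
have nrho : ~ M (tau * (s * s * s)) by apply: nMM.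
split => //.
- by split => //; apply: nMM => //; apply: nMM.
- by apply: scl.
- move=> i; have := Hhdd i => e. transitivity (s * (s * s * (h i * dd k0 d i))); [ring | by rewrite e mulr0].
Qed.
End Local.

Section Glob.
Variable R : comNzRingType.
Variables k0 k1 k2 : nat.
Variable A0 : 'M[R]_(k1, k0).
Variable A1 : 'M[R]_(k2, k1).
Hypothesis hex : forall u : 'rV[R]_k1, u *m A0 = 0 <-> exists v, u = v *m A1.
Hypothesis hk : krull_dim_eq R 0.
Hypothesis har : arithmetic R.

Section Data.
Variables (P P' : 'M[R]_k1) (h dd : 'I_k1 -> R) (X : 'M[R]_(k2, k1)) (Y : 'M[R]_(k1, k2)).
Variables (th rho ka : R).
Local Notation B := (diag_mx (\row_i h i) *m P).
Hypothesis F1 : th *: (P *m P') = th *: 1%:M.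
Hypothesis AnnU : forall i y, y * dd i = 0 -> exists c, rho * y = c * h i.
Hypothesis Hd : forall i, th * (h i * dd i) = 0.
Hypothesis E1 : ka *: A1 = X *m B.
Hypothesis E2 : th *: B = Y *m A1.

Definition Gmat : 'M[R]_(k2 + k1, k2) :=
  col_mx ((th * ka)%:M - X *m Y) (diag_mx (\row_i dd i) *m Y).

Lemma GA1 : Gmat *m A1 = 0.
Proof.
rewrite /Gmat mul_col_mx -[0]col_mx0; congr col_mx.
  rewrite mulmxBl -mulmxA -E2 mul_scalar_mx -scalerA E1 -scalemxAr.
  by rewrite subrr.
rewrite -mulmxA -E2 -scalemxAr /B mulmxA mulmx_diag.
rewrite mul_diag_mx; apply/matrixP => i j; rewrite !mxE.
have -> : th * (dd i * h i * P i j) = (th * (h i * dd i)) * P i j by ring.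
by rewrite Hd mul0r.
Qed.

Lemma local_gen (M' : R -> Prop) : maximal_ideal M' -> ~ M' th -> ~ M' rho -> ~ M' ka ->
  forall x : 'rV_k2, x *m A1 = 0 -> exists t (v : 'rV_(k2 + k1)), ~ M' t /\ t *: x = v *m Gmat.
Proof.
move=> hM' nth nrho nka x hx.
pose w := x *m X.
have wB : w *m B = 0 by rewrite /w -mulmxA -E1 -scalemxAr hx scaler0.
have whi : forall i, th * (w 0 i * h i) = 0.
  move=> i.
  have e : th *: (w *m diag_mx (\row_i h i)) = 0.
    transitivity ((w *m diag_mx (\row_i h i)) *m (th *: (P *m P'))).
      by rewrite F1 -scalemxAr mulmx1.
    by rewrite -scalemxAr !mulmxA -(mulmxA w) wB mul0mx scaler0.
  by have := congr1 (fun Z : 'rV_k1 => Z 0 i) e; rewrite /= mxE mul_mx_diag !mxE.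
have [f hf] : {f : 'I_k1 -> R * R & forall i, ~ M' (f i).1 /\ (f i).1 * w 0 i = (f i).2 * dd i}.
  apply: (@boolp.choice _ _ (fun i p => ~ M' p.1 /\ p.1 * w 0 i = p.2 * dd i)) => i.
  have [t [c [nt ht]]] := da_lemma hM' hk har nrho nth (AnnU (i := i)) (whi i).
  by exists (t, c).
pose T := \prod_i (f i).1.
pose c' : 'rV_k1 := \row_i ((\prod_(j | j != i) (f j).1) * (f i).2).
have nT : ~ M' T.
  apply: (big_ind (fun x => ~ M' x)) => //; first exact: nM1.
    by move=> a b; apply: nMM.
  by move=> i _; case: (hf i).
exists (T * th * ka), (row_mx (T *: x) c'); split.
  by apply: nMM => //; apply: nMM.
have ecd : c' *m diag_mx (\row_i dd i) = T *: w.
  apply/matrixP => a i; rewrite (ord1 a).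
  transitivity ((\prod_(j | j != i) (f j).1) * ((f i).2 * dd i)).
    by rewrite mul_mx_diag !mxE mulrA.
  case: (hf i) => _ <-.
  rewrite [(T *: w) _ _]mxE /T [in RHS](bigD1 i) //=; ring.
rewrite /Gmat mul_row_col mulmxBr mul_mx_scalar mulmxA ecd -!scalemxAl -/w.
by rewrite mulmxA -/w subrK scalerA; congr (_ *: _); ring.
Qed.
End Data.

Definition spanG m (G : 'M[R]_(m, k2)) (y : 'rV[R]_k2) := exists v, y = v *m G.

Lemma main_lemma : exists k3 (A2 : 'M[R]_(k3, k2)),
  forall u : 'rV[R]_k2, u *m A1 = 0 <-> exists v, u = v *m A2.
Proof.
pose Jdl := fun r : R => exists k3 (G : 'M[R]_(k3, k2)), G *m A1 = 0 /\
   forall x : 'rV_k2, x *m A1 = 0 -> exists n v, r ^+ n *: x = v *m G.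
have hJ : is_ideal Jdl.
  split.
  - exists 0%N, 0; split; first by rewrite mul0mx.
    by move=> x _; exists 1%N, 0; rewrite expr1 scale0r mul0mx.
  - move=> r r' [k3 [G [GA HG]]] [k3' [G' [GA' HG']]].
    exists (k3 + k3')%N, (col_mx G G'); split.
      by rewrite mul_col_mx GA GA' col_mx0.
    move=> x hx.
    have [n [v hv]] := HG x hx.
    have [n' [v' hv']] := HG' x hx.
    exists (n + n')%N.
    have sp0 : spanG (col_mx G G') 0 by exists 0; rewrite mul0mx.
    have spD : forall y z, spanG (col_mx G G') y -> spanG (col_mx G G') z ->
        spanG (col_mx G G') (y + z).
      by move=> y z [a ->] [b ->]; exists (a + b); rewrite mulmxDl.
    have spZ : forall c y, spanG (col_mx G G') y -> spanG (col_mx G G') (c *: y).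
      by move=> c y [a ->]; exists (c *: a); rewrite scalemxAl.
    suff : spanG (col_mx G G') ((r + r') ^+ (n + n') *: x) by [].
    rewrite exprDn scaler_suml.
    apply: (big_ind (spanG (col_mx G G'))) => // i _.
    rewrite -mulr_natl -scalerA; apply: (spZ).
    have [hi|hi] := leqP n' i.
      rewrite -(subnK hi) exprD mulrA -scalerA hv'.
      apply: (spZ); exists (row_mx 0 v').
      by rewrite mul_row_col mul0mx add0r.
    have hi' : (n <= n + n' - i)%N by rewrite -addnBA ?leq_addr // ltnW.
    rewrite -(subnK hi') exprD mulrAC -scalerA hv.
    apply: (spZ); exists (row_mx v 0).
    by rewrite mul_row_col mul0mx addr0.
  - move=> a r [k3 [G [GA HG]]]; exists k3, G; split => // x hx.
    have [n [v hv]] := HG x hx.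
    by exists n, (a ^+ n *: v); rewrite exprMn -scalerA hv scalemxAl.
have J1 : Jdl 1.
  apply: loc_glob => // M hM.
  have [P [P' [h [dd [X [Y [th [rho [ka [[nth nrho nka] F1 AnnU Hd [E1 E2]]]]]]]]]]] :=
    local_data hex hk har hM.
  exists (th * rho * ka); split; last by apply: nMM => //; apply: nMM.
  exists (k2 + k1)%N, (Gmat dd X Y th ka); split; first exact: (GA1 Hd E1 E2).
  move=> x hx.
  pose Cx := fun t : R => exists n v, t * (th * rho * ka) ^+ n *: x = v *m Gmat dd X Y th ka.
  have hC : is_ideal Cx.
    split.
    - by exists 0%N, 0; rewrite mul0r scale0r mul0mx.
    - move=> t t' [n [v hv]] [n' [v' hv']]; exists (n + n')%N.
      exists ((th * rho * ka) ^+ n' *: v + (th * rho * ka) ^+ n *: v').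
      rewrite mulmxDl -!scalemxAl -hv -hv' !scalerA -scalerDl; congr (_ *: _).
      by rewrite exprD; ring.
    - move=> c t [n [v hv]]; exists n, (c *: v).
      by rewrite -scalemxAl -hv scalerA mulrA.
  have [n [v hv]] : Cx 1.
    apply: loc_glob => // M' hM'.
    case: (classic (M' (th * rho * ka))) => hr.
      have [t0 [n [nt0 ht0]]] := nil_loc hk hM' hr.
      exists t0; split => //; exists n, 0.
      by rewrite ht0 scale0r mul0mx.
    have nth' : ~ M' th := nMl hM' (nMl hM' hr).
    have nrho' : ~ M' rho := nMr hM' (nMl hM' hr).
    have nka' : ~ M' ka := nMr hM' hr.
    have [t [v [nt ht]]] := local_gen Y F1 AnnU E1 hM' nth' nrho' nka' hx.
    exists t; split => //; exists 0%N, v.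
    by rewrite expr0 mulr1.
  by exists n, v; rewrite -hv mul1r.
have [k3 [G [GA HG]]] := J1.
exists k3, G => u; split.
  by move=> /HG [n [v hv]]; exists v; rewrite -hv expr1n scale1r.
by move=> [v ->]; rewrite -mulmxA GA mulmx0.
Qed.
End Glob.

Section Final.
Variable R : comNzRingType.

Record st := St { ska : nat; skb : nat; skc : nat; smA : 'M[R]_(skb, ska);
  smB : 'M[R]_(skc, skb);
  sex : forall u : 'rV[R]_skb, u *m smA = 0 <-> exists v, u = v *m smB }.

Hypothesis hk : krull_dim_eq R 0.
Hypothesis har : arithmetic R.

Definition step (s : st) : st :=
  let H := main_lemma (@sex s) hk har in
  let k3 := projT1 (boolp.cid H) in
  let H2 := projT2 (boolp.cid H) in
  let A2 := projT1 (boolp.cid H2) in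
  @St (skb s) (skc s) k3 (smB s) A2 (projT2 (boolp.cid H2)).

Lemma resol (E : lmodType R) : lambda_ge E 2 -> lambda_infinite E.
Proof.
move=> [k [A [f [surj H0 H1]]]].
have H1' := H1 0%N isT.
pose s0 := @St (k 0%N) (k 1%N) (k 2%N) (A 0%N) (A 1%N) H1'.
pose sq := fun n => iter n step s0.
move=> m.
exists (fun i => ska (sq i)), (fun i => smA (sq i)), f; split => //.
  by move=> _; apply: H0.
move=> i _; exact: (@sex (sq i)).
Qed.

End Final.

Theorem corollary2p7 (R : comNzRingType) :
  arithmetic R -> krull_dim_eq R 0 -> lambda_dim_le R 2.
Proof.
move=> har hk; exists 2%N; split => // E.
exact: resol.
Qed.
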